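(* Let $\mathcal{K}\subseteq\wp(\mathcal{G})$ be coherent and let $A_1,\ldots,A_n\in\mathcal{K}$ ($n\geq 1$). Suppose $B\subseteq\mathcal{G}$ is such that for each sequence $\langle g_1,\ldots,g_n\rangle\in A_1\times\cdots\times A_n$, either $0\in\mathcal{E}(\{g_1,\ldots,g_n\})$, or there is some $f\in B$ with $f\in\mathcal{E}(\{g_1,\ldots,g_n\})$. Then $B\in\mathcal{K}$.
   Context: $\Omega$ is a non-empty set and $\mathcal{G}$ is the set of bounded functions $\Omega\to\mathbb{R}$. $f\geq g$ means pointwise $\geq$; $f\gneq g$ means $f\geq g$ and $f\neq g$; $\mathcal{G}_{\gneq 0}=\{f: f\gneq 0\}$. $\mathrm{posi}(B)=\{\sum_{i=1}^m\lambda_i h_i: m\geq1,\lambda_i>0,h_i\in B\}$, and $\mathcal{E}(E):=\mathrm{posi}(E\cup\mathcal{G}_{\gneq 0})$. A set $\mathcal{K}\subseteq\wp(\mathcal{G})$ is coherent if: (K$_\emptyset$) $\emptyset\notin\mathcal{K}$; (K$_0$) if $A\in\mathcal{K}$ then $A\setminus\{0\}\in\mathcal{K}$; (K$_{\gneq0}$) if $g\in\mathcal{G}_{\gneq0}$ then $\{g\}\in\mathcal{K}$; (K$_\supseteq$) if $A\in\mathcal{K}$ and $B\supseteq A$ then $B\in\mathcal{K}$; (K$_{\mathrm{Dom}}$) if $A\in\mathcal{K}$ and for each $g\in A$, $f_g$ is a gamble with $f_g\geq g$, then $\{f_g: g\in A\}\in\mathcal{K}$; (K$_{\mathrm{Add}}$)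 if $A_1,\ldots,A_n\in\mathcal{K}$ (finitely many) and for each $\langle g_1,\ldots,g_n\rangle\in A_1\times\cdots\times A_n$, $f_{\langle g_1,\ldots,g_n\rangle}$ is some member of $\mathrm{posi}(\{g_1,\ldots,g_n\})$, then $\{f_{\langle g_1,\ldots,g_n\rangle}:\langle g_1,\ldots,g_n\rangle\in A_1\times\cdots\times A_n\}\in\mathcal{K}$. *)

(* Defs.v *)
From Stdlib Require Import Reals List.
From Stdlib Require Fin.
Open Scope R_scope.

Section Gambles.
Variable Omega : Type.

Definition gset := (Omega -> R) -> Prop.

Definition gbounded (f : Omega -> R) : Prop := exists M : R, forall w, Rabs (f w) <= M.

Definition zero_g : Omega -> R := fun _ => 0.

Definition gneq0 (f : Omega -> R) : Prop :=
  gbounded f /\ (forall w, 0 <= f w) /\ f <> zero_g.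

Definition posi (S : gset) : gset := fun f =>
  exists l : list (R * (Omega -> R)),
    l <> nil /\
    Forall (fun p => 0 < fst p /\ S (snd p)) l /\
    forall w, f w = fold_right (fun p acc => fst p * snd p w + acc) 0 l.

Definition Ecl (S : gset) : gset := posi (fun f => S f \/ gneq0 f).

Definition range_of {n : nat} (g : Fin.t n -> Omega -> R) : gset :=
  fun h => exists i, h = g i.

Definition coherent (K : gset -> Prop) : Prop :=
  (forall A, K A -> forall f, A f -> gbounded f) /\
  (forall A, K A -> exists f, A f) /\
  (forall A, K A -> K (fun f => A f /\ f <> zero_g)) /\
  (forall g, gneq0 g -> K (fun f => f = g)) /\
  (forall A B, K A -> (forall f, A f -> B f) -> (forall f, B f -> gbounded f) -> K B) /\
  (forall A (F : (Omega -> R) -> (Omega -> R)),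
      K A ->
      (forall g, A g -> gbounded (F g) /\ forall w, g w <= F g w) ->
      K (fun f => exists g, A g /\ f = F g)) /\
  (forall (n : nat) (As : Fin.t n -> gset)
          (F : (Fin.t n -> Omega -> R) -> (Omega -> R)),
      (forall i, K (As i)) ->
      (forall g, (forall i, As i (g i)) -> posi (range_of g) (F g)) ->
      K (fun f => exists g, (forall i, As i (g i)) /\ f = F g)).

End Gambles.

Arguments gbounded {Omega}.
Arguments zero_g {Omega}.
Arguments gneq0 {Omega}.
Arguments posi {Omega}.
Arguments Ecl {Omega}.
Arguments range_of {Omega n}.
Arguments coherent {Omega}.

(* Main.v *)
Require Import Defs.
From Stdlib Require Import Reals.
From Stdlib Require Fin.
From Stdlib Require Import Lra List Classical ClassicalEpsilon FunctionalExtensionality.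
Open Scope R_scope.

Local Notation fsum l w := (fold_right (fun p acc => fst p * snd p w + acc) 0 l).

Lemma gneq0_ext {Omega} (f g : Omega -> R) : (forall w, f w = g w) -> gneq0 f -> gneq0 g.
Proof. intros H G. assert (f = g) by (apply functional_extensionality; auto). subst; auto. Qed.

Lemma gneq0_scale {Omega} (c : R) (q : Omega -> R) : 0 < c -> gneq0 q -> gneq0 (fun w => c * q w).
Proof.
  intros Hc [[M HM] [Hn Hz]]. split; [|split].
  - exists (c * M). intro w. rewrite Rabs_mult, Rabs_pos_eq by lra.
    apply Rmult_le_compat_l; [lra| apply HM].
  - intro w. specialize (Hn w). nra.
  - intro E. apply Hz. apply functional_extensionality. intro w.
    pose proof (equal_f E w) as E'. unfold zero_g in *. simpl in E'.
    apply Rmult_integral in E'. destruct E'; [lra|auto].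
Qed.

Lemma gneq0_add {Omega} (a b : Omega -> R) : gneq0 a -> gneq0 b -> gneq0 (fun w => a w + b w).
Proof.
  intros [[M HM] [Hn Hz]] [[N HN] [Hn' Hz']]. split; [|split].
  - exists (M + N). intro w. eapply Rle_trans; [apply Rabs_triang|].
    specialize (HM w); specialize (HN w); lra.
  - intro w. specialize (Hn w); specialize (Hn' w). lra.
  - intro E. apply Hz. apply functional_extensionality. intro w.
    pose proof (equal_f E w) as E'. unfold zero_g in *. simpl in E'.
    specialize (Hn w); specialize (Hn' w). lra.
Qed.

Lemma key {Omega} (S : (Omega -> R) -> Prop) : forall l : list (R * (Omega -> R)),
  l <> nil -> Forall (fun p => 0 < fst p /\ (S (snd p) \/ gneq0 (snd p))) l ->
  gneq0 (fun w => fsum l w) \/ exists h, posi S h /\ forall w, h w <= fsum l w.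
Proof.
  induction l as [|[c q] l IH]; intros Hnil HF; [congruence|].
  inversion HF as [|? ? [Hc Hq] Hl']; subst. simpl in Hc, Hq.
  destruct l as [|p l'].
  - destruct Hq as [Sq|Gq].
    + right. exists (fun w => c * q w + 0). split.
      * exists ((c,q)::nil). split; [congruence|]. split; auto.
      * intro; simpl; lra.
    + left. apply (gneq0_ext (fun w => c * q w)); [intro; simpl; lra|].
      apply gneq0_scale; auto.
  - destruct (IH ltac:(congruence) Hl') as [G|[h [[l2 [Hl2 [HF2 Heq]]] Hh]]];
    destruct Hq as [Sq|Gq].
    + right. exists (fun w => c * q w + 0). split.
      * exists ((c,q)::nil). split; [congruence|]. split; auto.
      * intro w. destruct G as [_ [Gn _]]. specialize (Gn w). simpl in *. lra.
    + left. apply (gneq0_ext (fun w => c * q w + fsum (p :: l') w)); [intro; simpl; lra|].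
      apply (gneq0_add (fun w => c * q w) (fun w => fsum (p :: l') w)); auto.
      apply gneq0_scale; auto.
    + right. exists (fun w => c * q w + h w). split.
      * exists ((c,q)::l2). split; [congruence|]. split; auto.
        intro w. simpl. rewrite Heq. reflexivity.
      * intro w. specialize (Hh w). simpl in *. lra.
    + right. exists h. split.
      * exists l2; auto.
      * intro w. specialize (Hh w). destruct Gq as [_ [Gn _]]. specialize (Gn w).
        simpl in *. nra.
Qed.

Theorem mainTheorem2 (Omega : Type) (HOmega : inhabited Omega)
  (K : ((Omega -> R) -> Prop) -> Prop) (HK : coherent K)
  (n : nat) (Hn : (1 <= n)%nat) (As : Fin.t n -> (Omega -> R) -> Prop)
  (HAs : forall i, K (As i))
  (B : (Omega -> R) -> Prop) (HB : forall f, B f -> gbounded f)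
  (Hcov : forall g : Fin.t n -> Omega -> R, (forall i, As i (g i)) ->
            Ecl (range_of g) zero_g \/ exists f, B f /\ Ecl (range_of g) f) :
  K B.
Proof.
  destruct HK as (Hbd & Hne & H0 & Hpos & Hsup & Hdom & Hadd).
  destruct (classic (exists f, B f /\ gneq0 f)) as [[f [Bf Gf]]|Hno].
  { apply (Hsup (fun h => h = f) B (Hpos f Gf)); [intros; subst; auto | exact HB]. }
  assert (Hex : forall g, (forall i, As i (g i)) -> exists h, posi (range_of g) h /\
     ((forall w, h w <= 0) \/ exists f, B f /\ forall w, h w <= f w)).
  { intros g Hg. destruct (Hcov g Hg) as [E0 | [f [Bf Ef]]].
    - destruct E0 as [l [Hl [HF Heq]]].
      destruct (key _ l Hl HF) as [G | [h [Ph Hh]]].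
      + exfalso. assert (G' : gneq0 (@zero_g Omega)).
        { refine (gneq0_ext _ zero_g _ G). intro w; rewrite Heq; reflexivity. }
        destruct G' as [_ [_ G']]. apply G'; reflexivity.
      + exists h. split; auto. left. intro w. specialize (Hh w). specialize (Heq w).
        unfold zero_g in Heq. lra.
    - destruct Ef as [l [Hl [HF Heq]]].
      destruct (key _ l Hl HF) as [G | [h [Ph Hh]]].
      + exfalso. apply Hno. exists f. split; auto.
        refine (gneq0_ext _ f _ G). intro w; rewrite Heq; reflexivity.
      + exists h. split; auto. right. exists f. split; auto. intro w.
        specialize (Hh w). specialize (Heq w). lra. }
  pose (inh := inhabits (@zero_g Omega)).
  pose (F := fun g : Fin.t n -> Omega -> R => epsilon inh (fun h => posi (range_of g) h /\
     ((forall w, h w <= 0) \/ exists f, B f /\ forall w, h w <= f w))).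
  assert (KC := Hadd n As F HAs (fun g Hg => proj1 (epsilon_spec inh _ (Hex g Hg)))).
  pose (G := fun h : Omega -> R => epsilon inh (fun f => (f = zero_g /\ forall w, h w <= f w)
       \/ (B f /\ forall w, h w <= f w))).
  assert (HG : forall h, (exists g, (forall i, As i (g i)) /\ h = F g) ->
     (G h = zero_g /\ forall w, h w <= G h w) \/ (B (G h) /\ forall w, h w <= G h w)).
  { intros h [g [Hg ->]]. apply (epsilon_spec inh).
    destruct (proj2 (epsilon_spec inh _ (Hex g Hg))) as [Hle | [f [Bf Hf]]].
    - exists zero_g. left. split; auto.
    - exists f. right. auto. }
  assert (zbd : gbounded (@zero_g Omega)).
  { exists 0; intro; unfold zero_g; rewrite Rabs_R0; lra. }
  assert (KD := Hdom _ G KC (fun h Hh => match HG h Hh with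
     | or_introl (conj E Hl) => conj (eq_ind_r (fun x => gbounded x) zbd E) Hl
     | or_intror (conj Bh Hl) => conj (HB _ Bh) Hl end)).
  apply (Hsup _ B (H0 _ KD)); [|exact HB].
  intros f [[h [Ch ->]] Hnz]. destruct (HG h Ch) as [[E _]|[Bh _]]; [contradiction|exact Bh].
Qed.
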